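(* For every $c>1$ there exist $k\in\mathbb{N}$, real numbers $1\le t_1<t_2<\dots<t_k<c$, and $k$ power functions $f_1,\dots,f_k$ (i.e. $f_i(b)=a_ib^{s_i}$ with constants $a_i\in\mathbb{R}$) whose orders $s_i$ satisfy $0\le s_i<c$, such that $$(b+w)^c-b^c-w^c\le\sum_{i=1}^k f_i(b)\,w^{t_i}\qquad\text{for all } b,w\ge0.$$ *)

(* Defs.v *)
From HB Require Import structures.
From mathcomp Require Import all_boot all_order all_algebra.
From mathcomp Require Import all_classical all_reals all_analysis.
Set Implicit Arguments. Unset Strict Implicit. Unset Printing Implicit Defensive.
Import Order.TTheory GRing.Theory Num.Theory.
Local Open Scope ring_scope.

Definition power_fun {R : realType} (a s : R) (b : R) : R := a * b `^ s.

(* Main.v *)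
Require Import Defs.
From HB Require Import structures.
From mathcomp Require Import all_boot all_order all_algebra.
From mathcomp Require Import all_classical all_reals all_analysis.
From mathcomp Require Import ring lra.
Import Order.TTheory GRing.Theory Num.Theory.
Local Open Scope ring_scope.

Lemma K (R : realType) (c x : R) : 1 <= c -> 0 <= x -> x <= 1 ->
  (1 + x) `^ c <= 1 + 2 `^ c * x.
Proof.
move=> c1 x0 x1.
have := (@convex_powR R c c1 (Itv01 x0 x1) 2 1).
rewrite !inE /= !in_itv /= !andbT => /(_ ltac:(lra) ltac:(lra)).
rewrite convRE /= powR1 mulr1 /unstable.onem.
move=> h; set y := conv _ _ _ in h.
have Ey : y = 1 + x by transitivity (x * 2 + (1 - x) * 1); [by [] | ring].
rewrite Ey in h; apply: (le_trans h); lra.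
Qed.

Lemma H (R : realType) (c u v : R) : 1 <= c -> 0 <= v -> v <= u -> 0 < u ->
  (u + v) `^ c - u `^ c <= 2 `^ c * (u `^ (c - 1) * v).
Proof.
move=> c1 v0 vu u0.
have x0 : 0 <= v / u by rewrite divr_ge0 // ltW.
have x1 : v / u <= 1 by rewrite ler_pdivrMr // mul1r.
have E : u + v = u * (1 + v / u) by rewrite mulrDr mulr1 mulrCA divff ?gt_eqF // mulr1.
rewrite E powRM; [|exact: ltW|lra].
have Kx := @K R c _ c1 x0 x1.
have uc : u `^ c = u * u `^ (c - 1) by rewrite mulr_powRB1 // ?ltW //; lra.
have : u `^ c * (1 + v / u) `^ c <= u `^ c * (1 + 2 `^ c * (v / u)).
  by rewrite ler_pM2l // powR_gt0.
have -> : u `^ c * (1 + 2 `^ c * (v / u)) = u `^ c + 2 `^ c * (u `^ (c - 1) * v).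
  by rewrite uc; field; rewrite gt_eqF.
by move=> h; rewrite lerBlDl.
Qed.

Lemma H2 (R : realType) (c d b w : R) : 0 < d -> d <= 1 -> 0 <= b -> b <= w ->
  w `^ (c - 1) * b <= b `^ d * w `^ (c - d).
Proof.
move=> d0 d1 b0 bw.
have [->|bp] := eqVneq b 0.
  by rewrite mulr0 mulr_ge0 // powR_ge0.
have bpos : 0 < b by rewrite lt_neqAle eq_sym bp.
have wpos : 0 < w by apply: lt_le_trans bw.
have eb : b = b `^ d * b `^ (1 - d).
  by rewrite -powRD; [rewrite addrC subrK powRr1 |apply/implyP => _].
have ew : w `^ (c - d) = w `^ (c - 1) * w `^ (1 - d).
  by rewrite -powRD; [congr (_ `^ _); ring | apply/implyP => _; rewrite gt_eqF].
rewrite ew {1}eb.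
have h : b `^ (1 - d) <= w `^ (1 - d).
  by apply: ge0_ler_powR => //; rewrite ?nnegrE; lra.
have p1 : 0 <= w `^ (c - 1) by exact: powR_ge0.
have p2 : 0 <= b `^ d by exact: powR_ge0.
have -> : b `^ d * (w `^ (c - 1) * w `^ (1 - d)) = w `^ (c - 1) * (w `^ (1 - d) * b `^ d) by ring.
apply: ler_pM => //; first by rewrite mulr_ge0 // powR_ge0.
rewrite [X in _ <= X]mulrC; apply: ler_pM => //; exact: powR_ge0.
Qed.


Theorem lemmaC1 (R : realType) (c : R) (hc : 1 < c) :
  exists (k : nat) (t a s : 'I_k -> R),
    (forall i, 1 <= t i /\ t i < c) /\
    (forall i j : 'I_k, (i < j)%N -> t i < t j) /\
    (forall i, 0 <= s i /\ s i < c) /\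
    (forall b w : R, 0 <= b -> 0 <= w ->
       (b + w) `^ c - b `^ c - w `^ c
         <= \sum_(i < k) power_fun (a i) (s i) b * w `^ (t i)).
Proof.
pose d := (c - 1) / (c + 1).
have hd0 : 0 < d by rewrite divr_gt0 //; lra.
have hd1 : d <= 1 by rewrite ler_pdivrMr; lra.
have hd2 : d < c - 1 by rewrite ltr_pdivrMr; nra.
pose A : R := 2 `^ c.
have A0 : 0 <= A by exact: powR_ge0.
exists 2%N, (fun i : 'I_2 => if val i == 0%N then 1 else c - d), (fun _ => A),
  (fun i : 'I_2 => if val i == 0%N then c - 1 else d).
split; first by case=> [[|[|]]] //= _; lra.
split; first by case=> [[|[|]]] //= _ [[|[|]]] //= _ _; lra.
split; first by case=> [[|[|]]] //= _; lra.
move=> b w b0 w0.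
rewrite !big_ord_recr big_ord0 /= add0r /power_fun powRr1 //.
have c0 : c != 0 by rewrite gt_eqF //; lra.
have T1 : 0 <= A * b `^ (c - 1) * w by rewrite !mulr_ge0 // powR_ge0.
have T2 : 0 <= A * b `^ d * w `^ (c - d) by rewrite !mulr_ge0 // powR_ge0.
have bc0 : 0 <= b `^ c by exact: powR_ge0.
have wc0 : 0 <= w `^ c by exact: powR_ge0.
case/orP: (le_total w b) => [wb|bw].
  have [b00|bp] := eqVneq b 0.
    have w00 : w = 0 by apply: le_anti; rewrite w0 -b00 wb.
    have -> : (b + w) `^ c - b `^ c - w `^ c = 0 by rewrite b00 w00 addr0 powR0 // !subr0.
    lra.
  have bpos : 0 < b by rewrite lt_neqAle eq_sym bp.
  have := @H R c b w (ltW hc) w0 wb bpos.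
  rewrite -/A -mulrA; lra.
have [w00|wp] := eqVneq w 0.
  have b00 : b = 0 by apply: le_anti; rewrite b0 -w00 bw.
  have -> : (b + w) `^ c - b `^ c - w `^ c = 0 by rewrite b00 w00 addr0 powR0 // !subr0.
  lra.
have wpos : 0 < w by rewrite lt_neqAle eq_sym wp.
have := @H R c w b (ltW hc) b0 bw wpos.
have := @H2 R c d b w hd0 hd1 b0 bw.
rewrite -/A (addrC w b) => h1 h2.
have h3 : A * (w `^ (c - 1) * b) <= A * b `^ d * w `^ (c - d).
  by rewrite -mulrA; apply: ler_wpM2l.
lra.
Qed.
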